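(* Let $u,v\in(0,1)$. (1) For any $s\le2$ with $s\ne1$, $$K_s^+(u,v)\ge K_2^+(u,v)\Big[1-(1-v)\Big(1-\big(\tfrac vu\big)^{2-s}\Big)\Big].$$ (2) For $s=1$, $K_1^+(u,v)\ge K_2^+(u,v)\cdot\frac vu$.
   Context: For $s\in\mathbb{R}$, $\phi_s(x)=x\log x-x+1$ if $s=1$; $\phi_s(x)=\frac{1-s+sx-x^s}{s(1-s)}$ if $s\ne0,1$; $\phi_s(x)=-\log x+x-1$ if $s=0$. $K_s(u,v)=v\,\phi_s(u/v)+(1-v)\,\phi_s\big(\frac{1-u}{1-v}\big)$ (the $\phi_s$-divergence between $\mathrm{Ber}(u)$ and $\mathrm{Ber}(v)$), and $K_s^+(u,v)=K_s(u,v)$ if $0<v<u<1$, $K_s^+(u,v)=0$ otherwise. In particular $K_2(u,v)=\frac{(u-v)^2}{2v(1-v)}$. *)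

(* Defs.v *)
From Stdlib Require Import Reals.
Open Scope R_scope.

(* phi_s(x) for x > 0; real powers via Rpower (x^s = exp (s ln x)). *)
Definition phi (s x : R) : R :=
  if Req_EM_T s 1 then x * ln x - x + 1
  else if Req_EM_T s 0 then - ln x + x - 1
  else (1 - s + s * x - Rpower x s) / (s * (1 - s)).

(* phi_s-divergence between Ber(u) and Ber(v). *)
Definition K (s u v : R) : R :=
  v * phi s (u / v) + (1 - v) * phi s ((1 - u) / (1 - v)).

Definition Kplus (s u v : R) : R :=
  if Rlt_dec 0 v then if Rlt_dec v u then if Rlt_dec u 1 then K s u v else 0 else 0 else 0.

(* Main.v *)
Require Import Defs.
From Stdlib Require Import Reals Lra.
From Coquelicot Require Import Coquelicot.
Open Scope R_scope.
Lemma key (F F1 F2 : R -> R) (X c : R) :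
  0 < X ->
  (forall t, 0 < t -> is_derive F t (F1 t)) ->
  (forall t, 0 < t -> is_derive F1 t (F2 t)) ->
  F 1 = 0 -> F1 1 = 0 ->
  (forall t, 0 < t -> (1 <= t <= X \/ X <= t <= 1) -> F2 t >= c) ->
  F X >= c * (X-1)^2/2.
Proof.
  intros HX dF dF1 F0 F10 Hc.
  set (h := fun t => F t - c*(t-1)^2/2).
  set (h1 := fun t => F1 t - c*(t-1)).
  assert (dh : forall t, 0<t -> derivable_pt_lim h t (h1 t)).
  { intros t Ht. apply is_derive_Reals. unfold h, h1. auto_derive.
    - exists (F1 t). apply dF; lra.
    - replace (Derive (fun x => F x) t) with (F1 t); [idtac|symmetry; apply is_derive_unique; apply dF; lra]. first [lra | (simpl; ring) | field | nra | (change (F1 t - c*(t-1)) with (F1 t + - (c*(t-1))); ring)]. }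
  assert (dh1 : forall t, 0<t -> derivable_pt_lim h1 t (F2 t - c)).
  { intros t Ht. apply is_derive_Reals. unfold h1. auto_derive.
    - exists (F2 t). apply dF1; lra.
    - replace (Derive (fun x => F1 x) t) with (F2 t); [lra|symmetry; apply is_derive_unique; apply dF1; lra]. }
  assert (h0 : h 1 = 0) by (unfold h; cbv beta; rewrite F0; field).
  assert (h10 : h1 1 = 0) by (unfold h1; cbv beta; rewrite F10; ring).
  assert (goal : h X >= 0).
  { destruct (Rtotal_order X 1) as [Hlt|[Heq|Hgt]].
    - assert (P : forall t, X <= t <= 1 -> h1 t <= 0).
      { intros t Ht. destruct (Req_dec t 1) as [->|Hne]; [lra|].
        destruct (MVT_cor2 h1 (fun t => F2 t - c) t 1) as [xi [E Hxi]]; [lra| |].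
        { intros; apply dh1; lra. }
        assert (F2 xi >= c) by (apply Hc; lra).
        assert (0 <= (F2 xi - c) * (1 - t)) by (apply Rmult_le_pos; lra). lra. }
      destruct (MVT_cor2 h h1 X 1) as [xi [E Hxi]]; [lra| |].
      { intros; apply dh; lra. }
      assert (h1 xi <= 0) by (apply P; lra).
      assert (h1 xi * (1 - X) <= 0).
      { apply Rmult_le_0_r; lra. } 
      lra.
    - subst; lra.
    - assert (P : forall t, 1 <= t <= X -> h1 t >= 0).
      { intros t Ht. destruct (Req_dec t 1) as [->|Hne]; [lra|].
        destruct (MVT_cor2 h1 (fun t => F2 t - c) 1 t) as [xi [E Hxi]]; [lra| |].
        { intros; apply dh1; lra. }
        assert (F2 xi >= c) by (apply Hc; lra).
        assert (0 <= (F2 xi - c) * (t - 1)) by (apply Rmult_le_pos; lra). lra. }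
      destruct (MVT_cor2 h h1 1 X) as [xi [E Hxi]]; [lra| |].
      { intros; apply dh; lra. }
      assert (h1 xi >= 0) by (apply P; lra).
      assert (0 <= h1 xi * (X - 1)) by (apply Rmult_le_pos; lra).
      lra. }
  unfold h in goal. lra.
Qed.

Lemma expln (a t : R) : 0 < t -> exp (a * ln t) = t * exp ((a-1) * ln t).
Proof.
  intros Ht. rewrite <- (exp_ln t Ht) at 2. rewrite <- exp_plus. f_equal. ring.
Qed.

Lemma phi_bound (s X c : R) : s <= 2 -> 0 < X ->
  (forall t, 0 < t -> (1 <= t <= X \/ X <= t <= 1) -> Rpower t (s-2) >= c) ->
  phi s X >= c * (X-1)^2/2.
Proof.
  intros Hs HX Hc. unfold phi.
  destruct (Req_EM_T s 1) as [E1|N1].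
  - subst s.
    apply (key (fun x => x * ln x - x + 1) (fun x => ln x) (fun t => Rpower t (1-2))); auto.
    + intros t Ht. auto_derive; [lra|]. field. lra.
    + intros t Ht. replace (1-2) with (-(1)) by ring. rewrite Rpower_Ropp, Rpower_1 by lra.
      auto_derive; [lra|]. field; lra.
    + rewrite ln_1. ring.
    + apply ln_1.
  - destruct (Req_EM_T s 0) as [E0|N0].
    + subst s.
      apply (key (fun x => - ln x + x - 1) (fun x => - / x + 1) (fun t => Rpower t (0-2))); auto.
      * intros t Ht. auto_derive; [lra|]. field. lra.
      * intros t Ht. replace (0-2) with (-(INR 2)) by (simpl; ring). rewrite Rpower_Ropp, Rpower_pow by lra.
        auto_derive; [lra|]. field; lra.
      * rewrite ln_1. ring.
      * field.
    + apply (key (fun x => (1 - s + s * x - exp (s * ln x)) / (s * (1 - s)))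
                 (fun x => (s - s * exp ((s-1) * ln x)) / (s * (1 - s)))
                 (fun t => Rpower t (s-2))); auto.
      * intros t Ht. auto_derive; [lra|]. rewrite (expln s t Ht). field.
        split; [intro H; apply N1; lra|split; lra].
      * intros t Ht. unfold Rpower. auto_derive; [lra|]. rewrite (expln (s-1) t Ht).
        replace (s-1-1) with (s-2) by ring. field.
        split; [intro H; apply N1; lra|split; lra].
      * unfold Rpower. fold (Rpower X s). rewrite ln_1, Rmult_0_r, exp_0. field.
        split; [intro H; apply N1; lra | lra].
      * rewrite ln_1, Rmult_0_r, exp_0. field.
        split; [intro H; apply N1; lra | lra].
Qed.

Lemma exp_le' (a b : R) : a <= b -> exp a <= exp b.
Proof. intros H. destruct (Rle_lt_or_eq_dec _ _ H) as [Hlt|Heq]. left; apply exp_increasing; auto. rewrite Heq; lra. Qed.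

Lemma ln_le' (a b : R) : 0 < a -> a <= b -> ln a <= ln b.
Proof. intros Ha H. destruct (Rle_lt_or_eq_dec _ _ H) as [Hlt|Heq]. left; apply ln_increasing; auto. rewrite Heq; lra. Qed.

Lemma Kgen (s u v : R) : s <= 2 -> 0 < v -> v < u -> u < 1 ->
  K s u v >= (u-v)^2/2 * (Rpower (v/u) (2-s) / v + 1/(1-v)).
Proof.
  intros Hs hv vu hu. unfold K.
  assert (HX1 : 1 < u/v).
  { apply (Rmult_lt_reg_r v); [lra|]. unfold Rdiv. rewrite Rmult_assoc, Rinv_l; lra. }
  assert (HX2 : 0 < (1-u)/(1-v) < 1).
  { split. apply Rdiv_lt_0_compat; lra.
    apply (Rmult_lt_reg_r (1-v)); [lra|]. unfold Rdiv. rewrite Rmult_assoc, Rinv_l; lra. }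
  assert (A := phi_bound s (u/v) (Rpower (u/v) (s-2)) Hs ltac:(lra)).
  assert (B := phi_bound s ((1-u)/(1-v)) 1 Hs ltac:(lra)).
  assert (A' : phi s (u/v) >= Rpower (u/v) (s-2) * (u/v-1)^2/2).
  { apply A. intros t Ht [[H1 H2]|[H1 H2]]; [|lra].
    unfold Rpower. apply Rle_ge, exp_le'.
    assert (ln t <= ln (u/v)) by (apply ln_le'; lra). nra. }
  assert (B' : phi s ((1-u)/(1-v)) >= 1 * ((1-u)/(1-v)-1)^2/2).
  { apply B. intros t Ht [[H1 H2]|[H1 H2]]; [lra|].
    unfold Rpower. rewrite <- exp_0. apply Rle_ge, exp_le'.
    assert (ln t <= ln 1) by (apply ln_le'; lra). rewrite ln_1 in *. nra. }
  assert (C : Rpower (u/v) (s-2) = Rpower (v/u) (2-s)).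
  { unfold Rpower. f_equal. replace (v/u) with (/(u/v)) by (field; lra).
    rewrite ln_Rinv by lra. ring. }
  rewrite C in A'.
  assert (D : v * (Rpower (v/u) (2-s) * (u/v-1)^2/2) + (1-v) * (1 * ((1-u)/(1-v)-1)^2/2)
            = (u-v)^2/2 * (Rpower (v/u) (2-s) / v + 1/(1-v))) by (field; lra).
  rewrite <- D.
  apply Rle_ge, Rplus_le_compat; apply Rmult_le_compat_l; lra.
Qed.

Lemma Rpow2 (x : R) : 0 < x -> Rpower x 2 = x^2.
Proof. intros H. replace 2 with (INR 2) by (simpl; ring). apply Rpower_pow; auto. Qed.

Lemma K2 (u v : R) : 0 < v -> v < u -> u < 1 -> K 2 u v = (u-v)^2/(2*v*(1-v)).
Proof.
  intros hv vu hu. unfold K, phi.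
  destruct (Req_EM_T 2 1); [lra|]. destruct (Req_EM_T 2 0); [lra|].
  rewrite !Rpow2.
  - field. lra.
  - apply Rdiv_lt_0_compat; lra.
  - apply Rdiv_lt_0_compat; lra.
Qed.

Theorem lemmaA11 (u v : R) (hu0 : 0 < u) (hu1 : u < 1) (hv0 : 0 < v) (hv1 : v < 1) :
  (forall s : R, s <= 2 -> s <> 1 ->
     Kplus s u v >= Kplus 2 u v * (1 - (1 - v) * (1 - Rpower (v / u) (2 - s))))
  /\ Kplus 1 u v >= Kplus 2 u v * (v / u).
Proof.
  unfold Kplus.
  destruct (Rlt_dec 0 v); [|split; [intros; rewrite Rmult_0_l; lra | rewrite Rmult_0_l; lra]].
  destruct (Rlt_dec v u) as [vu|]; [|split; [intros; rewrite Rmult_0_l; lra | rewrite Rmult_0_l; lra]].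
  destruct (Rlt_dec u 1); [|split; [intros; rewrite Rmult_0_l; lra | rewrite Rmult_0_l; lra]].
  rewrite K2 by lra. split.
  - intros s Hs _. assert (H := Kgen s u v Hs hv0 vu hu1).
    replace ((u - v) ^ 2 / (2 * v * (1 - v)) * (1 - (1 - v) * (1 - Rpower (v / u) (2 - s))))
      with ((u-v)^2/2 * (Rpower (v/u) (2-s) / v + 1/(1-v))) by (field; lra).
    exact H.
  - assert (H := Kgen 1 u v ltac:(lra) hv0 vu hu1).
    replace (2-1) with 1 in H by ring. rewrite Rpower_1 in H by (apply Rdiv_lt_0_compat; lra).
    assert (E : (u-v)^2/2 * (v/u/v + 1/(1-v)) - (u - v) ^ 2 / (2 * v * (1 - v)) * (v / u)
              = (u-v)^2/2 * ((u-v)/(u*(1-v)))) by (field; lra).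
    assert (0 <= (u-v)^2/2 * ((u-v)/(u*(1-v)))).
    { apply Rmult_le_pos. apply Rmult_le_pos; [apply pow2_ge_0|lra].
      apply Rlt_le, Rdiv_lt_0_compat; [lra|]. apply Rmult_lt_0_compat; lra. }
    lra.
Qed.
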